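(* Let $T$ be a tree on $n$ vertices rooted at a vertex $v$. Then there exists a unique $n$-tuple $(F_1,\dots,F_n)$ of symmetric functions in the indeterminates $x_1,x_2,\dots$ such that for every positive integer $c$, $$Z_T(c)=\sum_{i=1}^n x_c^i F_i.$$
   Context: For a graph $G$, a proper coloring is a map $\kappa: V(G)\to\mathbb{N}=\{1,2,\dots\}$ with $\kappa(u)\neq\kappa(w)$ whenever $uw\in E(G)$. With commuting indeterminates $x_1,x_2,\dots$, for a vertex $v$ and color $c\in\mathbb{N}$, $Z_G^v(c)=\sum_{\kappa}\prod_{u\in V(G)}x_{\kappa(u)}$, summed over all proper colorings $\kappa$ of $G$ with $\kappa(v)=c$. For a tree $T$ rooted at $v$, $Z_T(c)$ denotes $Z_T^v(c)$. *)

(* Defs.v *)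
From HB Require Import structures.
From mathcomp Require Import all_boot all_order all_algebra.
From mathcomp Require Import finmap.
Set Implicit Arguments. Unset Strict Implicit. Unset Printing Implicit Defensive.
Import GRing.Theory Num.Theory.
Local Open Scope ring_scope.

(* Formal power series in countably many commuting indeterminates
   x_0, x_1, x_2, ... (x_j here stands for x_{j+1} of the paper),
   with integer coefficients.  A monomial is a finitely supported
   exponent function nat -> nat; a series is its coefficient map. *)
Definition monomial := {fsfun nat -> nat with 0%N}.
Definition series := monomial -> int.

Definition mdeg (m : monomial) : nat := (\sum_(j <- finsupp m) m j)%N.

Definition is_symmetric (f : series) : Prop :=
  (exists d : nat, forall m : monomial, f m != 0 -> (mdeg m <= d)%N) /\
  (forall s : nat -> nat, bijective s ->
     forall m m' : monomial, (forall j, m' j = m (s j)) -> f m' = f m).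

Definition mlower (c k : nat) (m : monomial) : monomial :=
  [fsfun j in finsupp m => if j == c then (m j - k)%N else m j | 0%N].

Definition mulXpow (c k : nat) (f : series) : series :=
  fun m => if (k <= m c)%N then f (mlower c k m) else 0.

Definition simple_graph (V : finType) (e : rel V) : Prop :=
  symmetric e /\ irreflexive e.

Definition is_tree (V : finType) (e : rel V) : Prop :=
  (forall u w : V, connect e u w) /\
  (forall s : seq V, uniq s -> (2 < size s)%N -> ~~ cycle e s).

(* Z_G^v(c): the coefficient of the monomial x^m is the number of proper
   colourings k : V -> nat with k v = c whose colour content is m, i.e.
   #{u | k u = j} = m j for every colour j.  Every such colouring only uses
   colours in the support of m, hence takes values below B. *)
Definition Zv (V : finType) (e : rel V) (v : V) (c : nat) : series :=
  fun m =>
    let B := (\max_(j <- finsupp m) j).+1 in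
    (#|[set k : {ffun V -> 'I_B} |
         [&& [forall u, forall w, e u w ==> (k u != k w)],
             val (k v) == c &
             [forall j : 'I_B, #|[pred u | k u == j]| == m (val j)]]]|%N)%:Z.

(* Main.v *)
Require Import Defs.
From HB Require Import structures.
From mathcomp Require Import all_boot all_order all_algebra.
From mathcomp Require Import finmap zify.
Import GRing.Theory Num.Theory.
Local Open Scope ring_scope.
Set Implicit Arguments. Unset Strict Implicit. Unset Printing Implicit Defensive.

Definition bnd (m : monomial) : nat := (\max_(j <- finsupp m) j).+1.

Lemma bnd_supp (m : monomial) j : m j != 0%N -> (j < bnd m)%N.
Proof.
move=> H; have Hj : j \in finsupp m by rewrite mem_finsupp.
by rewrite ltnS (@leq_bigmax_seq _ _ xpredT (fun j : nat => j) j Hj).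
Qed.

Lemma bnd_out (m : monomial) j : (bnd m <= j)%N -> m j = 0%N.
Proof. by move=> H; apply/eqP; apply: contraTT H => /bnd_supp; rewrite ltnNge. Qed.

Lemma fresh0 (m : monomial) : m (bnd m) = 0%N.
Proof. exact: bnd_out. Qed.

Definition mraise (c k : nat) (m : monomial) : monomial :=
  [fsfun j in (c |` finsupp m)%fset => if j == c then (m j + k)%N else m j | 0%N].

Lemma mraiseE c k m j : mraise c k m j = if j == c then (m j + k)%N else m j.
Proof.
rewrite /mraise fsfunE !inE mem_finsupp.
case: eqP => //= _; case: ifP => //; by move/negbFE/eqP.
Qed.

Lemma mlowerE c k m j : mlower c k m j = if j == c then (m j - k)%N else m j.
Proof.
rewrite /mlower fsfunE mem_finsupp.
case: ifP => //; move/negbFE/eqP => ->; by case: eqP.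
Qed.

Lemma mlower_raise c k m : mlower c k (mraise c k m) = m.
Proof. by apply/fsfunP => j; rewrite mlowerE mraiseE; case: eqP => // ->; rewrite addnK. Qed.

Lemma mdeg_ord (m : monomial) N : (forall j, m j != 0%N -> (j < N)%N) ->
  mdeg m = (\sum_(j < N) m j)%N.
Proof.
move=> HN; rewrite /mdeg -(big_mkord xpredT) /index_iota subn0.
transitivity (\sum_(j <- iota 0 N | j \in finsupp m) m j)%N; last first.
  rewrite big_mkcond /=; apply: eq_bigr => j _; by case: finsuppP.
rewrite -[RHS]big_filter; apply: perm_big.
apply: uniq_perm; first exact: fset_uniq.
  by rewrite filter_uniq // iota_uniq.
move=> j; rewrite mem_filter mem_iota /= add0n.
case Hj: (j \in finsupp m) => //=; symmetry; apply: HN; by rewrite -mem_finsupp.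
Qed.
Section ZvSec.
Variables (V : finType) (e : rel V) (v : V).

Definition ZvP (N : nat) (c : nat) (m : monomial) (k : {ffun V -> 'I_N}) : bool :=
  [&& [forall u, forall w, e u w ==> (k u != k w)], val (k v) == c &
      [forall j : 'I_N, #|[pred u | k u == j]| == m (val j)]].

Definition ZvN (N : nat) (c : nat) (m : monomial) : nat :=
  #|[set k : {ffun V -> 'I_N} | ZvP c m k]|.

Lemma ZvE c m : Zv e v c m = (ZvN (bnd m) c m)%:Z.
Proof. by []. Qed.

Lemma ZvP_col N c m (k : {ffun V -> 'I_N}) u : ZvP c m k -> m (k u) = #|[pred w | k w == k u]|.
Proof. by case/and3P=> _ _ /forallP /(_ (k u)) /eqP. Qed.

Lemma ZvP_colpos N c m (k : {ffun V -> 'I_N}) u : ZvP c m k -> (0 < m (k u))%N.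
Proof. by move=> H; rewrite (ZvP_col u H); apply/card_gt0P; exists u; rewrite inE. Qed.

Lemma transport (m m' : monomial) (s g : nat -> nat) c :
  cancel s g -> cancel g s -> (forall j, m' j = m (s j)) ->
  (ZvN (bnd m') c m' <= ZvN (bnd m) (s c) m)%N.
Proof.
move=> sg gs Hm; rewrite /ZvN.

pose Phi (k : {ffun V -> 'I_(bnd m')}) : {ffun V -> 'I_(bnd m)} := [ffun u => inord (s (k u))].
have HPhi k u : ZvP c m' k -> val (Phi k u) = s (k u).
  move=> Hk; rewrite ffunE; apply: inordK; apply: bnd_supp; rewrite -Hm -lt0n.
  exact: ZvP_colpos Hk.
rewrite -(card_in_imset (f := Phi)); last first.
  move=> k1 k2; rewrite !inE => H1 H2 Heq; apply/ffunP => u.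
  apply: val_inj; apply: (can_inj sg); by rewrite -HPhi // -HPhi // Heq.
apply: subset_leq_card; apply/subsetP => k /imsetP [k' Hk' ->].
move: Hk'; rewrite !inE => Hk'; have Hk'0 := Hk'.
case/and3P: Hk' => /forallP Hpr /eqP Hv /forallP Hcnt.
apply/and3P; split.
- apply/forallP => u; apply/forallP => w; apply/implyP => euw.
  move: (Hpr u) => /forallP /(_ w) /implyP /(_ euw).
  apply: contra => /eqP Heq; apply/eqP; apply: val_inj; apply: (can_inj sg).
  by rewrite -!HPhi // Heq.
- by rewrite HPhi // Hv.
- apply/forallP => j.
  have Hpred : [pred u | Phi k' u == j] =i [pred u | val (k' u) == g j].
    move=> u; rewrite !inE -(inj_eq val_inj) HPhi //.
    apply/eqP/eqP => [<-|->]; [by rewrite sg | by rewrite gs].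
  rewrite (eq_card Hpred).
  have -> : m j = m' (g j) by rewrite Hm gs.
  case: (ltnP (g j) (bnd m')) => Hgj.
    rewrite (@eq_card _ _ [pred u | k' u == Ordinal Hgj]) ?(eqP (Hcnt (Ordinal Hgj))) //.
  rewrite (bnd_out Hgj); apply/eqP; apply: eq_card0 => u; rewrite !inE.
  by apply/negbTE; rewrite neq_ltn (leq_trans (ltn_ord _) Hgj).
Qed.

Lemma Zv_equiv (m m' : monomial) (s : nat -> nat) c :
  bijective s -> (forall j, m' j = m (s j)) -> Zv e v c m' = Zv e v (s c) m.
Proof.
case=> g sg gs Hm; rewrite !ZvE; congr (_ %:Z); apply/eqP; rewrite eqn_leq.
rewrite (transport c sg gs Hm) /=.
have Hm2 : forall j, m j = m' (g j) by move=> j; rewrite Hm gs.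
by have := transport (s c) gs sg Hm2; rewrite sg.
Qed.

Lemma Zv_ex c m : Zv e v c m != 0 -> exists k : {ffun V -> 'I_(bnd m)}, ZvP c m k.
Proof.
rewrite ZvE /ZvN => H.
have : (0 < #|[set k : {ffun V -> 'I_(bnd m)} | ZvP c m k]|)%N.
  by rewrite lt0n; apply: contra H => /eqP ->.
by case/card_gt0P => k; rewrite inE => Hk; exists k.
Qed.

Lemma Zv_pos c m : Zv e v c m != 0 -> (0 < m c)%N.
Proof.
case/Zv_ex => k Hk; have := ZvP_colpos v Hk.
by case/and3P: Hk => _ /eqP -> _.
Qed.

Lemma Zv_deg c m : Zv e v c m != 0 -> mdeg m = #|V|.
Proof.
case/Zv_ex => k Hk; rewrite (@mdeg_ord m (bnd m)); last exact: bnd_supp.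
case/and3P: Hk => _ _ /forallP Hcnt.
rewrite (eq_bigr (fun j => #|[pred u | k u == j]|)); last by move=> j _; rewrite (eqP (Hcnt j)).
rewrite -sum1_card.
rewrite (eq_bigr (fun u => \sum_(j < bnd m) (k u == j) : nat)%N); last first.
  move=> u _; rewrite (bigD1 (k u)) //= eqxx big1 // => j /negbTE; by rewrite eq_sym => ->.
rewrite exchange_big /=; apply: eq_bigr => j _; rewrite -sum1_card big_mkcond /=; apply: eq_bigr => u _; rewrite inE; by case: eqP.
Qed.
End ZvSec.

Lemma mdeg_raise d k (p : monomial) : mdeg (mraise d k p) = (mdeg p + k)%N.
Proof.
have HdN : (d < maxn (bnd p) d.+1)%N by rewrite leq_max ltnSn orbT.
rewrite (@mdeg_ord _ (maxn (bnd p) d.+1)); last first.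
  move=> j; rewrite mraiseE; case: (eqVneq j d) => [->|_] Hj; first exact: HdN.
  by rewrite leq_max (bnd_supp Hj).
rewrite (@mdeg_ord p (maxn (bnd p) d.+1)); last first.
  by move=> j Hj; rewrite leq_max (bnd_supp Hj).
rewrite (eq_bigr (fun j : 'I__ => p j + (if val j == d then k else 0))%N); last first.
  by move=> j _; rewrite mraiseE; case: (eqVneq (val j) d) => [->|_]; rewrite ?addn0.
rewrite big_split /=; congr (_ + _)%N.
rewrite (bigD1 (Ordinal HdN)) //= eqxx big1 ?addn0 // => j.
by rewrite -(inj_eq val_inj) /= => /negbTE ->.
Qed.

Definition swap (c d : nat) (j : nat) : nat :=
  if j == c then d else if j == d then c else j.

Lemma swapK c d : cancel (swap c d) (swap c d).
Proof.
move=> j; rewrite /swap.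
case: (eqVneq j c) => [->|Hjc]; first by rewrite eqxx; case: eqP.
case: (eqVneq j d) => [->|Hjd]; first by rewrite eqxx.
by rewrite (negbTE Hjc) (negbTE Hjd).
Qed.

Section FSec.
Variables (V : finType) (e : rel V) (v : V).

Definition step (prev : nat -> series) (a : nat) : series := fun p =>
  Zv e v (bnd p) (mraise (bnd p) a p) -
  \sum_(1 <= i < a) prev i (mraise (bnd p) (a - i) p).

Fixpoint Fall (a : nat) : nat -> series :=
  if a is a'.+1 then fun i => if (i <= a')%N then Fall a' i else step (Fall a') i
  else fun _ _ => 0.

Definition FF (i : nat) : series := Fall i i.

Lemma Fall_stab a i : (i <= a)%N -> Fall a i = FF i.
Proof.
elim: a => [|a IH]; first by rewrite leqn0 => /eqP ->.
rewrite leq_eqVlt => /orP [/eqP ->|]; first by [].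
by rewrite ltnS /= => H; rewrite H IH.
Qed.

Lemma FF0 p : FF 0 p = 0.
Proof. by []. Qed.

Lemma Frec a p : (0 < a)%N -> FF a p = step FF a p.
Proof.
case: a => // a _; rewrite /FF /= ltnn /step; congr (_ - _).
apply: eq_big_nat => i /andP [_ Hi]; rewrite Fall_stab // -ltnS //.
Qed.

Definition Psym (b : nat) := forall s, bijective s ->
  forall p p' : monomial, (forall j, p' j = p (s j)) -> FF b p' = FF b p.

Lemma Qlem a : (forall b, (b < a)%N -> Psym b) -> (0 < a)%N ->
  forall (p : monomial) c, p c = 0%N ->
  FF a p = Zv e v c (mraise c a p) - \sum_(1 <= i < a) FF i (mraise c (a - i) p).
Proof.
move=> IH Ha p c Hc; rewrite Frec // /step.
set d := bnd p.
have Hs : forall k j, mraise c k p j = mraise d k p (swap c d j).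
  move=> k j; rewrite !mraiseE /swap.
  case: (eqVneq j c) => [->|Hjc]; first by rewrite eqxx Hc fresh0.
  case: (eqVneq j d) => Hjd.
    by rewrite Hjd in Hjc *; rewrite eq_sym (negbTE Hjc) Hc fresh0.
  by rewrite (negbTE Hjd).
have Hb : bijective (swap c d) by exists (swap c d); apply: swapK.
congr (_ - _).
  rewrite (Zv_equiv e v c Hb (Hs a)) /swap eqxx //.
apply: eq_big_nat => i /andP [_ Hi].
by rewrite (IH i Hi _ Hb _ _ (Hs _)).
Qed.

Lemma Psym_all a : Psym a.
Proof.
elim/ltn_ind: a => a IH.
case: (posnP a) => [->|Ha]; first by move=> s _ p p' _; rewrite !FF0.
move=> s [g sg gs] p p' Hp.
set d := bnd p.
have Hc : p' (g d) = 0%N by rewrite Hp gs fresh0.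
have Hb : bijective s by exists g.
have Hs : forall k j, mraise (g d) k p' j = mraise d k p (s j).
  move=> k j; rewrite !mraiseE Hp.
  have -> : (j == g d) = (s j == d) by apply/eqP/eqP => [->|<-]; rewrite ?gs ?sg.
  by [].
rewrite (Qlem IH Ha Hc) (Frec p Ha) /step -/d; congr (_ - _).
  by rewrite (Zv_equiv e v (g d) Hb (Hs a)) gs.
apply: eq_big_nat => i /andP [_ Hi].
by rewrite (IH i Hi _ Hb _ _ (Hs _)).
Qed.

Lemma FF_deg a p : FF a p != 0 -> (a + mdeg p = #|V|)%N.
Proof.
elim/ltn_ind: a p => a IH p.
case: (posnP a) => [->|Ha]; first by rewrite FF0 eqxx.
move=> H0; apply/eqP; move: H0; apply: contraNT => Hn; apply/eqP.
rewrite Frec // /step.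
have -> : Zv e v (bnd p) (mraise (bnd p) a p) = 0.
  apply/eqP; apply: contraNT Hn => /Zv_deg; rewrite mdeg_raise addnC => ->.
  by [].
rewrite big1_seq ?subrr //= => i; rewrite mem_index_iota => /andP [_ Hi].
apply/eqP; apply: contraNT Hn => /IH; rewrite mdeg_raise => /(_ Hi).
move=> H; apply/eqP; rewrite -H; lia.
Qed.

Lemma FF_big a p : (#|V| < a)%N -> FF a p = 0.
Proof.
move=> Ha; apply/eqP; apply: contraTT Ha => /FF_deg <-.
by rewrite -leqNgt leq_addr.
Qed.

End FSec.

Lemma mlower0 c (m : monomial) : mlower c 0 m = m.
Proof. by apply/fsfunP => j; rewrite mlowerE subn0; case: eqP. Qed.

Lemma FF_expand (V : finType) (e : rel V) (v : V) c m :
  Zv e v c m = \sum_(i < #|V|) mulXpow c i.+1 (FF e v i.+1) m.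
Proof.
case: (posnP (m c)) => [Hm0|Ha].
  have -> : Zv e v c m = 0.
    by apply/eqP; apply/negPn/negP => /Zv_pos; rewrite Hm0.
  by rewrite big1 // => i _; rewrite /mulXpow Hm0.
set a := m c.
set p := mlower c a m.
have Hp : p c = 0%N by rewrite mlowerE eqxx subnn.
have Hraise k : (k <= a)%N -> mraise c k p = mlower c (a - k) m.
  move=> Hk; apply/fsfunP => j; rewrite mraiseE !mlowerE.
  case: (eqVneq j c) => [->|_] //; rewrite -/a subnn add0n subKn //.
have Q := Qlem (fun b _ => Psym_all e v b) Ha Hp.
rewrite Hraise // subnn mlower0 in Q.
pose T i := if (i <= a)%N then FF e v i (mlower c i m) else 0.
pose K := (maxn a #|V|).+1.
have E1 : \sum_(i < #|V|) mulXpow c i.+1 (FF e v i.+1) m = \sum_(1 <= i < K) T i.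
  rewrite -(big_mkord xpredT (fun i => mulXpow c i.+1 (FF e v i.+1) m)).
  have -> : \sum_(0 <= i < #|V|) mulXpow c i.+1 (FF e v i.+1) m
           = \sum_(1 <= i < #|V|.+1) T i.
    by rewrite big_add1 /=; apply: eq_bigr => i _; rewrite /T /mulXpow.
  rewrite (@big_cat_nat _ _ _ #|V|.+1 1 K) //=; last by rewrite ltnS leq_maxr.
  rewrite [X in _ = _ + X]big1_seq ?addr0 // => i /andP [_]; rewrite mem_index_iota => /andP [Hi _].
  by rewrite /T; case: ifP => // _; rewrite FF_big.
have E2 : Zv e v c m = \sum_(1 <= i < K) T i.
  rewrite (@big_cat_nat _ _ _ a.+1 1 K) //=; last by rewrite ltnS leq_maxl.
  rewrite [X in _ = _ + X]big1_seq ?addr0; last first.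
    move=> i /andP [_]; rewrite mem_index_iota => /andP [Hi _].
    by rewrite /T leqNgt Hi.
  rewrite big_nat_recr //= /T leqnn -/p.
  have E : \sum_(1 <= i < a) T i = \sum_(1 <= i < m c) FF e v i (mraise c (m c - i) p).
    apply: eq_big_nat => i /andP [Hi0 Hi].
    by rewrite /T (ltnW Hi) Hraise ?subKn // ?leq_subr // ltnW.
  by rewrite Q E addrC subrK.
by rewrite E1 E2.
Qed.

Lemma uniq0 n (H : 'I_n -> series) :
  (forall c m, \sum_(i < n) mulXpow c i.+1 (H i) m = 0) -> forall i m, H i m = 0.
Proof.
move=> HH.
suff S : forall k (i : 'I_n), (i < k)%N -> forall q, H i q = 0.
  by move=> i; apply: (S i.+1).
elim=> [|k IHk] i // Hik q.
rewrite -(HH (bnd q) (mraise (bnd q) i.+1 q)) (bigD1 i) //= big1 ?addr0.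
  by rewrite /mulXpow mraiseE eqxx fresh0 add0n leqnn mlower_raise.
move=> j Hji; rewrite /mulXpow mraiseE eqxx fresh0 add0n.
case: (ltngtP j i) => Hj.
- by case: ifP => // _; apply: IHk; apply: leq_trans Hj _.
- by rewrite ltnS leqNgt Hj.
- by move: Hji; rewrite (val_inj Hj) eqxx.
Qed.

Theorem lemma3p4 (V : finType) (e : rel V) (v : V) :
  simple_graph e -> is_tree e ->
  exists F : 'I_#|V| -> series,
    ((forall i, is_symmetric (F i)) /\
     (forall (c : nat) (m : monomial),
        Zv e v c m = \sum_(i < #|V|) mulXpow c i.+1 (F i) m)) /\
    (forall G : 'I_#|V| -> series,
       (forall i, is_symmetric (G i)) ->
       (forall (c : nat) (m : monomial),
          Zv e v c m = \sum_(i < #|V|) mulXpow c i.+1 (G i) m) ->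
       forall i m, G i m = F i m).
Proof.
move=> _ _.
exists (fun i : 'I_#|V| => FF e v i.+1).
split; [split|].
- move=> i; split.
    by exists #|V| => m /FF_deg <-; apply: leq_addl.
  move=> s Hs m m' Hm; exact: (Psym_all e v i.+1 Hs Hm).
- exact: FF_expand.
- move=> G _ HG i m; apply/eqP; rewrite -subr_eq0; apply/eqP.
  apply: (@uniq0 _ (fun i q => G i q - FF e v i.+1 q)) => c m0.
  rewrite (eq_bigr (fun i : 'I_#|V| => mulXpow c i.+1 (G i) m0 - mulXpow c i.+1 (FF e v i.+1) m0)); last first.
    by move=> j _; rewrite /mulXpow; case: ifP; rewrite ?subrr.
  by rewrite sumrB -HG -FF_expand subrr.
Qed.
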